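(* Let $\mathcal{R}^{rsc}$ be a rich single-crossing domain and $F:\mathcal{R}^{rsc}\to\mathbb{Z}$ strategy-proof. Then the indirect preference correspondence $V^F$ is continuous: for every $R\in\mathcal{R}^{rsc}$ and every monotone sequence $\{R^n\}$ in $\mathcal{R}^{rsc}$ converging to $R$ in the order topology, the sequence $\{F(R^n)\}$ converges in $\mathbb{Z}$ and $\lim_n F(R^n)\;I\;F(R)$, where $I$ is the indifference relation of $R$. The same holds for mechanisms defined on a closed interval $[\underline R,\overline R]\subseteq\mathcal{R}^{rsc}$.
   Context: $\mathbb{Z}=[0,\infty)\times[0,1]$ with the Euclidean topology; $(t',q')<(t'',q'')$ means $t'<t''$, $q'<q''$; $x\le y$ means $x=y$ or $x<y$; $\square(z)=\{x:x\le z\}$. A classical preference is a complete transitive relation $R$ on $\mathbb{Z}$ (strict part $P$, indifference $I$) strictly decreasing in $t$ for fixed $q$, strictly increasing in $q$ for fixed $t$, with closed upper and lower contour sets. Distinct classical preferences satisfy single-crossing if any indifference set of one meets any indifference set of the other in at most one point. A rich single-crossing domain $\mathcal{R}^{rsc}$ is a set of pairwise single-crossing classical preferences such that for all $x'<x''$ some member is indifferent between them. For distinct members, $R'\prec R''$ means $\square(z)\cap\{x:xR''z\}\subseteq\square(z)\cap\{x:xR'z\}$ for all $z$; $\prec$ is a linear order and $\mathcal{R}^{rsc}$ has its order topology. A sequence is monotone if $R^n\precsim R^{n+1}$ for all $n$ or $R^{n+1}\precsim R^n$ for all $n$ ($\precsim$ means $\prec$ or $=$). A mechanism $F$ maps the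 domain to $\mathbb{Z}$ and is strategy-proof if $F(R')R'F(R'')$ for all $R',R''$. Its indirect preference correspondence is $V^F(R)=\{z\in\mathbb{Z}: z\,I\,F(R)\}$. *)

(* Defs.v *)
(* R : realType, points of Z live in R * R
   (product topology = Euclidean topology on R^2). *)
From HB Require Import structures.
From mathcomp Require Import all_boot all_order all_algebra.
From mathcomp Require Import all_classical all_reals all_analysis.
Set Implicit Arguments. Unset Strict Implicit. Unset Printing Implicit Defensive.
Import Order.TTheory GRing.Theory Num.Theory numFieldNormedType.Exports.
Local Open Scope classical_set_scope.
Local Open Scope ring_scope.

Notation pt R := (R * R)%type (only parsing).

Section Defs.
Variable R : realType.
Local Notation pt := (R * R)%type.

(* Z = [0,oo) x [0,1]; a point is (t, q) *)
Definition inZ (x : pt) : Prop := 0 <= x.1 /\ 0 <= x.2 <= 1.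

Definition lt_pt (x y : pt) : Prop := x.1 < y.1 /\ x.2 < y.2.
Definition le_pt (x y : pt) : Prop := x = y \/ lt_pt x y.

(* A preference is a binary relation ("x R y" = x is weakly preferred to y).
   It is required to live on Z (classical preferences below). *)
Definition pref := pt -> pt -> Prop.

Definition strict (P : pref) (x y : pt) : Prop := P x y /\ ~ P y x.
Definition indiff (P : pref) (x y : pt) : Prop := P x y /\ P y x.

Definition classical (P : pref) : Prop :=
  (forall x y, P x y -> inZ x /\ inZ y) /\
  (forall x y, inZ x -> inZ y -> P x y \/ P y x) /\
  (forall x y z, P x y -> P y z -> P x z) /\
  (forall t1 t2 q, inZ (t1, q) -> inZ (t2, q) -> t1 < t2 ->
      strict P (t1, q) (t2, q)) /\
  (forall t q1 q2, inZ (t, q1) -> inZ (t, q2) -> q1 < q2 ->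
      strict P (t, q2) (t, q1)) /\
  (forall z, inZ z ->
      closed [set x | inZ x /\ P x z] /\ closed [set x | inZ x /\ P z x]).

Definition indiff_set (P : pref) (z : pt) : set pt :=
  [set x | inZ x /\ indiff P x z].

Definition single_crossing (P1 P2 : pref) : Prop :=
  forall z1 z2, inZ z1 -> inZ z2 ->
  forall x y, indiff_set P1 z1 x -> indiff_set P2 z2 x ->
              indiff_set P1 z1 y -> indiff_set P2 z2 y -> x = y.

Definition rich_single_crossing (D : set pref) : Prop :=
  (forall P, D P -> classical P) /\
  (forall P1 P2, D P1 -> D P2 -> P1 <> P2 -> single_crossing P1 P2) /\
  (forall x y, inZ x -> inZ y -> lt_pt x y ->
     exists P, D P /\ indiff P x y).

Definition box (z : pt) : set pt := [set x | inZ x /\ le_pt x z].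

Definition prec (P1 P2 : pref) : Prop :=
  P1 <> P2 /\
  forall z, inZ z ->
    box z `&` [set x | P2 x z] `<=` box z `&` [set x | P1 x z].

Definition precsim (P1 P2 : pref) : Prop := prec P1 P2 \/ P1 = P2.

Definition monotone_seq (Rn : nat -> pref) : Prop :=
  (forall n, precsim (Rn n) (Rn n.+1)) \/
  (forall n, precsim (Rn n.+1) (Rn n)).

(* convergence in the order topology of (J, ≺): every subbasic open ray of J
   containing P eventually contains the sequence *)
Definition order_converges (J : set pref) (Rn : nat -> pref) (P : pref) : Prop :=
  (forall a, J a -> prec a P -> exists N, forall n, (N <= n)%N -> prec a (Rn n)) /\
  (forall b, J b -> prec P b -> exists N, forall n, (N <= n)%N -> prec (Rn n) b).

Definition closed_interval (D : set pref) (Plo Phi : pref) : set pref :=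
  [set P | D P /\ precsim Plo P /\ precsim P Phi].

Definition mechanism_on (J : set pref) (F : pref -> pt) : Prop :=
  forall P, J P -> inZ (F P).

Definition strategy_proof (J : set pref) (F : pref -> pt) : Prop :=
  forall P1 P2, J P1 -> J P2 -> P1 (F P1) (F P2).

Definition indirect_pref (F : pref -> pt) (P : pref) : set pt :=
  [set z | inZ z /\ indiff P z (F P)].

Definition VF_continuous (J : set pref) (F : pref -> pt) : Prop :=
  forall P, J P -> forall Rn : nat -> pref, (forall n, J (Rn n)) ->
    monotone_seq Rn -> order_converges J Rn P ->
    exists z : pt, inZ z /\ ((fun n => F (Rn n)) @ \oo --> z) /\
                   indirect_pref F P z.

End Defs.

(* Main.v *)
Require Import Defs.
From mathcomp Require Import all_boot all_order all_algebra.
From mathcomp Require Import all_classical all_reals all_analysis.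
From mathcomp Require Import lra.
Set Implicit Arguments. Unset Strict Implicit. Unset Printing Implicit Defensive.
Import Order.TTheory GRing.Theory Num.Theory numFieldNormedType.Exports.
Local Open Scope classical_set_scope.
Local Open Scope ring_scope.

Section Helpers. Variable R : realType. Implicit Types (x y z w : R * R).
Definition near2 (e : R) x y := `|x.1 - y.1| < e /\ `|x.2 - y.2| < e.

Lemma closed_eps (S : set (R * R)) p : closed S ->
  (forall e, 0 < e -> exists u, S u /\ near2 e u p) -> S p.
Proof.
move=> cS H; apply: cS => B /nbhs_ballP [e e0 sB].
have [u [Su [h1 h2]]] := H e e0.
exists u; split => //; apply: sB; split => /=; rewrite -ball_normE /ball_ /= distrC //.
Qed.

Lemma open_eps (S : set (R * R)) p : closed S -> ~ S p ->
  exists2 e, 0 < e & forall u, near2 e u p -> ~ S u.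
Proof.
move=> cS nSp; apply: contrapT => H; apply: nSp; apply: closed_eps => // e e0.
apply: contrapT => H2; apply: H; exists e => // u nu Su; apply: H2; by exists u.
Qed.
Lemma ivt (a b : R) (A B : R -> Prop) : a <= b -> A a -> B b ->
  (forall s, a <= s <= b -> A s \/ B s) ->
  (forall s, a <= s <= b -> (forall e, 0 < e -> exists s', [/\ a <= s' <= b, `|s' - s| < e & A s']) -> A s) ->
  (forall s, a <= s <= b -> (forall e, 0 < e -> exists s', [/\ a <= s' <= b, `|s' - s| < e & B s']) -> B s) ->
  exists s, [/\ a <= s <= b, A s & B s].
Proof.
move=> ab Aa Bb cov clA clB.
pose C := [set s | a <= s <= b /\ A s].
have hs : has_sup C.
  split; first by exists a; split => //; rewrite lexx ab.
  by exists b => s [/andP[_ ->]].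
set c := sup C.
have ac : a <= c by apply: sup_upper_bound => //; split => //; rewrite lexx ab.
have cb : c <= b.
  apply: ge_sup; first by exists a; split => //; rewrite lexx ab.
  by move=> s [/andP[_ ->]].
have acb : a <= c <= b by rewrite ac cb.
have Ac : A c.
  apply: clA => // e e0.
  have [s' [Hs' As'] hlt] := sup_adherent e0 hs.
  exists s'; split => //.
  have : s' <= c by apply: sup_upper_bound.
  rewrite -/c in hlt.
  move=> h; rewrite ler0_norm ?subr_le0 //; lra.
have [cb'|cb'] := eqVneq c b.
  by exists c; split => //; rewrite cb'.
have cltb : c < b by rewrite lt_neqAle cb' cb.
exists c; split => //; apply: clB => // e e0.
pose s' := Num.min (c + e / 2) b.
have hs'1 : c < s'.
  rewrite /s' lt_min cltb andbT; lra.
have hs'2 : s' <= b by rewrite /s' ge_min lexx orbT.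
have hs'3 : s' <= c + e / 2 by rewrite /s' ge_min lexx.
exists s'; split.
- apply/andP; split => //; lra.
- rewrite ger0_norm; lra.
- have := cov s'; case.
    apply/andP; split => //; lra.
  + move=> As'. have : s' <= c by apply: (sup_upper_bound hs); split => //; apply/andP; split => //; lra.
    lra.
  + by [].
Qed.

Lemma conn (a b : R) (A B : R -> Prop) : a <= b -> A a -> B b ->
  (forall s, a <= s <= b -> A s \/ B s) ->
  (forall s, a <= s <= b -> A s -> exists2 e, 0 < e & forall s', a <= s' <= b -> `|s' - s| < e -> A s') ->
  (forall s, a <= s <= b -> B s -> exists2 e, 0 < e & forall s', a <= s' <= b -> `|s' - s| < e -> B s') ->
  (forall s, a <= s <= b -> A s -> B s -> False) -> False.
Proof.
move=> ab Aa Bb cov oA oB dis.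
have [s [H1 H2 H3]] : exists s, [/\ a <= s <= b, A s & B s].
  apply: ivt => // s hs cl.
  - apply: contrapT => nA; have := cov s hs; case => // Bs.
    have [e e0 He] := oB s hs Bs.
    have [s' [h1 h2 h3]] := cl e e0.
    by apply: (dis s') => //; apply: He.
  - apply: contrapT => nB; have := cov s hs; case => // As.
    have [e e0 He] := oA s hs As.
    have [s' [h1 h2 h3]] := cl e e0.
    by apply: (dis s') => //; apply: He.
by apply: (dis s).
Qed.
End Helpers.
Section Prefs.
Variable R : realType.
Implicit Types (x y z w u : R * R) (P Q : pref R).

Lemma inZP x : inZ x <-> [/\ 0 <= x.1, 0 <= x.2 & x.2 <= 1].
Proof. by rewrite /inZ; split => [[h /andP[h1 h2]]|[h h1 h2]]; split => //; apply/andP. Qed.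

Section Cl.
Variable P : pref R.
Hypothesis cP : classical P.

Lemma clZ x y : P x y -> inZ x /\ inZ y.
Proof. by case: cP => h _; apply: h. Qed.
Lemma cltot x y : inZ x -> inZ y -> P x y \/ P y x.
Proof. by case: cP => _ [h _]; apply: h. Qed.
Lemma cltr x y z : P x y -> P y z -> P x z.
Proof. by case: cP => _ [_ [h _]]; apply: h. Qed.
Lemma clrefl x : inZ x -> P x x.
Proof. by move=> h; case: (cltot h h). Qed.
Lemma clt t1 t2 q : inZ (t1, q) -> inZ (t2, q) -> t1 < t2 -> P (t1, q) (t2, q) /\ ~ P (t2, q) (t1, q).
Proof. by case: cP => _ [_ [_ [h _]]]; apply: h. Qed.
Lemma clq t q1 q2 : inZ (t, q1) -> inZ (t, q2) -> q1 < q2 -> P (t, q2) (t, q1) /\ ~ P (t, q1) (t, q2).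
Proof. by case: cP => _ [_ [_ [_ [h _]]]]; apply: h. Qed.
Lemma clup z : inZ z -> closed [set x | inZ x /\ P x z].
Proof. by case: cP => _ [_ [_ [_ [_ h]]]] hz; case: (h z hz). Qed.
Lemma cllo z : inZ z -> closed [set x | inZ x /\ P z x].
Proof. by case: cP => _ [_ [_ [_ [_ h]]]] hz; case: (h z hz). Qed.

Lemma cldom x y : inZ x -> inZ y -> x.1 <= y.1 -> y.2 <= x.2 -> P x y.
Proof.
move=> /inZP[x1 x2 x3] /inZP[y1 y2 y3] h1 h2.
have m : inZ (x.1, y.2) by apply/inZP.
have Pxm : P x (x.1, y.2).
  have [e|ne] := eqVneq y.2 x.2.
    by rewrite e -surjective_pairing; apply: clrefl; apply/inZP.
  rewrite [X in P X _]surjective_pairing; apply: (clq _ _ _).1 => //; first by apply/inZP.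
  by rewrite lt_neqAle ne h2.
have Pmy : P (x.1, y.2) y.
  have [e|ne] := eqVneq x.1 y.1.
    by rewrite e -surjective_pairing; apply: clrefl; apply/inZP.
  rewrite [X in P _ X]surjective_pairing; apply: (clt _ _ _).1 => //; first by apply/inZP.
  by rewrite lt_neqAle ne h1.
exact: cltr Pxm Pmy.
Qed.

Lemma cldomS x y : inZ x -> inZ y -> x.1 <= y.1 -> y.2 <= x.2 -> (x.1 < y.1 \/ y.2 < x.2) -> ~ P y x.
Proof.
move=> hx hy h1 h2 [s|s] Pyx.
- have hm : inZ (x.1, y.2) by case/inZP: hx; case/inZP: hy => *; apply/inZP.
  have Pxm : P x (x.1, y.2) by apply: cldom.
  have := (clt (t1:=x.1) (t2:=y.1) (q:=y.2) hm _ s).2; apply.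
    by rewrite -surjective_pairing.
  by rewrite -surjective_pairing; apply: cltr Pyx Pxm.
- have hm : inZ (y.1, x.2) by case/inZP: hx; case/inZP: hy => *; apply/inZP.
  have Pxm : P x (y.1, x.2) by apply: cldom.
  have := (clq (t:=y.1) (q1:=y.2) (q2:=x.2) _ hm s).2; apply.
    by rewrite -surjective_pairing.
  by rewrite -surjective_pairing; apply: cltr Pyx Pxm.
Qed.

Lemma strict_weak x y z : ~ P y x -> P y z -> ~ P z x.
Proof. by move=> nyx yz zx; apply: nyx; apply: cltr yz zx. Qed.
Lemma weak_strict x y z : P x y -> ~ P z y -> ~ P z x.
Proof. by move=> xy nzy zx; apply: nzy; apply: cltr zx xy. Qed.

Lemma clnot x y : inZ x -> inZ y -> ~ P x y -> P y x.
Proof. by move=> hx hy n; case: (cltot hx hy). Qed.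

Lemma limup z x : inZ z -> (forall e, 0 < e -> exists u, P u z /\ near2 e u x) -> P x z.
Proof.
move=> hz H; have : [set x | inZ x /\ P x z] x.
  apply: closed_eps; first exact: clup.
  move=> e e0; have [u [Puz nu]] := H e e0; exists u; split => //; split => //.
  by case: (clZ Puz).
by case.
Qed.
Lemma limlo z x : inZ z -> (forall e, 0 < e -> exists u, P z u /\ near2 e u x) -> P z x.
Proof.
move=> hz H; have : [set x | inZ x /\ P z x] x.
  apply: closed_eps; first exact: cllo.
  move=> e e0; have [u [Puz nu]] := H e e0; exists u; split => //; split => //.
  by case: (clZ Puz).
by case.
Qed.
Lemma openup z x : inZ z -> ~ P x z ->
  exists2 e, 0 < e & forall u, near2 e u x -> ~ P u z.
Proof.
move=> hz nP; have [e e0 He] := open_eps (clup hz) (p := x) (fun h => nP h.2).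
exists e => // u nu Puz; apply: (He u nu); split => //; by case: (clZ Puz).
Qed.
Lemma openlo z x : inZ z -> ~ P z x ->
  exists2 e, 0 < e & forall u, near2 e u x -> ~ P z u.
Proof.
move=> hz nP; have [e e0 He] := open_eps (cllo hz) (p := x) (fun h => nP h.2).
exists e => // u nu Puz; apply: (He u nu); split => //; by case: (clZ Puz).
Qed.
End Cl.
End Prefs.
Section Order.
Variable R : realType.
Implicit Types (x y z w u : R * R) (P Q : pref R).

Definition inclp (P1 P2 : pref R) := forall z, inZ z ->
    box z `&` [set x | P2 x z] `<=` box z `&` [set x | P1 x z].

Lemma inclp_use P1 P2 x z : inclp P1 P2 -> inZ x -> inZ z -> lt_pt x z -> P2 x z -> P1 x z.
Proof.
move=> h hx hz lt p2; have := h z hz x; case.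
  by split => //; split => //; right.
by move=> _.
Qed.

Lemma inclp_trans P1 P2 P3 : inclp P1 P2 -> inclp P2 P3 -> inclp P1 P3.
Proof. by move=> h1 h2 z hz x hx; apply: h1 => //; apply: h2. Qed.

Lemma inclp_refl P : inclp P P.
Proof. by move=> z hz x. Qed.

Lemma precsim_inclp P1 P2 : precsim P1 P2 -> inclp P1 P2.
Proof. by case => [[_ h]|->] //; apply: inclp_refl. Qed.

Lemma sc_sym P Q : single_crossing P Q -> single_crossing Q P.
Proof. by move=> h z1 z2 h1 h2 x y a b c d; apply: (h z2 z1). Qed.

Lemma sc_contra P Q x y : classical P -> classical Q -> single_crossing P Q ->
  inZ x -> inZ y -> lt_pt x y -> P x y -> P y x -> Q x y -> Q y x -> False.
Proof.
move=> cP cQ sc hx hy [lt1 _] a b c d.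
have e := sc y y hy hy x y (conj hx (conj a b)) (conj hx (conj c d))
  (conj hy (conj (clrefl cP hy) (clrefl cP hy))) (conj hy (conj (clrefl cQ hy) (clrefl cQ hy))).
by move: lt1; rewrite e ltxx.
Qed.

Lemma ivt_h P y q a b : classical P -> inZ y -> 0 <= a -> a <= b -> 0 <= q -> q <= 1 ->
  P (a, q) y -> P y (b, q) -> exists s, [/\ a <= s <= b, P (s, q) y & P y (s, q)].
Proof.
move=> cP hy a0 ab q0 q1 Pa Pb.
have hZ s : a <= s <= b -> inZ (s, q).
  by move=> /andP[h _]; apply/inZP; split => //=; lra.
apply: ivt => //.
- by move=> s hs; apply: cltot => //; apply: hZ.
- move=> s hs cl; apply: (limup cP hy) => e e0.
  have [s' [_ h1 h2]] := cl e e0; exists (s', q); split => //; split => //=.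
  by rewrite subrr normr0.
- move=> s hs cl; apply: (limlo cP hy) => e e0.
  have [s' [_ h1 h2]] := cl e e0; exists (s', q); split => //; split => //=.
  by rewrite subrr normr0.
Qed.

Lemma ivt_v P y t a b : classical P -> inZ y -> 0 <= t -> 0 <= a -> a <= b -> b <= 1 ->
  P y (t, a) -> P (t, b) y -> exists s, [/\ a <= s <= b, P (t, s) y & P y (t, s)].
Proof.
move=> cP hy t0 a0 ab b1 Pa Pb.
have hZ s : a <= s <= b -> inZ (t, s).
  by move=> /andP[h h']; apply/inZP; split => //=; lra.
have [s [h1 h2 h3]] : exists s, [/\ a <= s <= b, P y (t, s) & P (t, s) y].
  apply: ivt => //.
  - by move=> s hs; apply: cltot => //; apply: hZ.
  - move=> s hs cl; apply: (limlo cP hy) => e e0.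
    have [s' [_ h1 h2]] := cl e e0; exists (t, s'); split => //; split => //=.
    by rewrite subrr normr0.
  - move=> s hs cl; apply: (limup cP hy) => e e0.
    have [s' [_ h1 h2]] := cl e e0; exists (t, s'); split => //; split => //=.
    by rewrite subrr normr0.
by exists s.
Qed.

Lemma exists_indiff P y : classical P -> inZ y -> 0 < y.1 -> 0 < y.2 ->
  exists x, [/\ inZ x, lt_pt x y, P x y & P y x].
Proof.
move=> cP hy y1 y2; have [yy1 yy2 yy3] := (inZP y).1 hy.
have h00 : inZ ((0 : R), (0 : R)) by apply/inZP; split => //=; lra.
case: (cltot cP h00 hy) => h.
- have [s [/andP[s0 s1] Ps1 Ps2]] : exists s, [/\ 0 <= s <= y.1, P (s, 0) y & P y (s, 0)].
    apply: ivt_h => //; try lra.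
    by apply: (cldom cP) => //=; try lra; apply/inZP; split => /=; lra.
  have sy : s < y.1.
    rewrite lt_neqAle s1 andbT; apply/negP => /eqP e.
    have hz : inZ (s, 0) by apply/inZP; split => /=; lra.
    by apply: (cldomS cP (x := y) (y := (s, 0)) hy hz _ _ _ Ps1) => /=; [lra|lra|right].
  exists (s, 0); split => //; first by apply/inZP; split => /=; lra.
- have [s [/andP[s0 s1] Ps1 Ps2]] : exists s, [/\ 0 <= s <= y.2, P (0, s) y & P y (0, s)].
    apply: ivt_v => //; try lra.
    by apply: (cldom cP) => //=; try lra; apply/inZP; split => /=; lra.
  have sy : s < y.2.
    rewrite lt_neqAle s1 andbT; apply/negP => /eqP e.
    have hz : inZ (0, s) by apply/inZP; split => /=; lra.
    by apply: (cldomS cP (x := (0, s)) (y := y) hz hy _ _ _ Ps2) => /=; [lra|lra|left].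
  exists (0, s); split => //; first by apply/inZP; split => /=; lra.
Qed.
End Order.
Section Order2.
Variable R : realType.
Implicit Types (x y z w u : R * R) (P Q : pref R).

Lemma pos_min (a b : R) : 0 < a -> 0 < b -> exists d : R, [/\ 0 < d, d <= a & d <= b].
Proof.
move=> a0 b0; exists (Num.min a b); split; first by rewrite lt_min a0 b0.
  by rewrite ge_min lexx.
by rewrite ge_min lexx orbT.
Qed.

Lemma absP (a e : R) : `|a| < e -> - e < a /\ a < e.
Proof. by rewrite ltr_norml => /andP[]. Qed.

Lemma absI (a e : R) : - e < a -> a < e -> `|a| < e.
Proof. by move=> h1 h2; rewrite ltr_norml h1 h2. Qed.

Lemma near2W e e' u v : near2 e u v -> e <= e' -> near2 e' u v.
Proof. by move=> [h1 h2] ee; split; apply: lt_le_trans ee. Qed.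


Lemma clt1 P x t1 : classical P -> inZ x -> inZ (t1, x.2) -> t1 < x.1 -> ~ P x (t1, x.2).
Proof. by move=> cP hx h lt; have := (clt cP h (t2 := x.1) _ lt).2; rewrite -surjective_pairing; apply. Qed.
Lemma clt2 P x t2 : classical P -> inZ x -> inZ (t2, x.2) -> x.1 < t2 -> ~ P (t2, x.2) x.
Proof. by move=> cP hx h lt; have := (clt cP (t1 := x.1) (q := x.2) _ h lt).2; rewrite -surjective_pairing; apply. Qed.
Lemma clq1 P x q2 : classical P -> inZ x -> inZ (x.1, q2) -> x.2 < q2 -> ~ P x (x.1, q2).
Proof. by move=> cP hx h lt; have := (clq cP (q1 := x.2) _ h lt).2; rewrite -surjective_pairing; apply. Qed.
Lemma clq2 P x q1 : classical P -> inZ x -> inZ (x.1, q1) -> q1 < x.2 -> ~ P (x.1, q1) x.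
Proof. by move=> cP hx h lt; have := (clq cP (t := x.1) (q2 := x.2) h _ lt).2; rewrite -surjective_pairing; apply. Qed.

Lemma U_lemma (Rr b : pref R) w x : classical Rr -> classical b -> inclp Rr b ->
  inZ w -> inZ x -> lt_pt w x -> Rr x w -> b x w.
Proof.
move=> cR cb hi hw hx [lt1 lt2] Rxw; apply: contrapT => nb.
have [e e0 He] := openup cb hw nb.
have [d [d0 d1 d2]] : exists d : R, [/\ 0 < d, d <= e / 2 & d <= (x.1 - w.1) / 2] by apply: pos_min; lra.
have [w1 w2 w3] := (inZP w).1 hw; have [x1 x2 x3] := (inZP x).1 hx.
have hx' : inZ (x.1 - d, x.2) by apply/inZP; split => /=; lra.
have nb' : ~ b (x.1 - d, x.2) w.
  apply: He; split => /=; last by rewrite subrr normr0.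
  by apply: absI; lra.
have bw : b w (x.1 - d, x.2) by apply: (clnot cb hx' hw nb').
have Rw : Rr w (x.1 - d, x.2) by apply: (inclp_use hi) => //; split => /=; lra.
have nn : ~ Rr x (x.1 - d, x.2) by apply: (clt1 cR) => //; lra.
exact: nn (cltr cR Rxw Rw).
Qed.


Definition WP P Q y := exists x, [/\ inZ x, lt_pt x y, ~ P y x & ~ Q x y].

Lemma G1 P Q : classical P -> classical Q -> ~ inclp Q P -> exists y, inZ y /\ WP P Q y.
Proof.
move=> cP cQ ni; apply: contrapT => nex; apply: ni => z hz x [[hx hle] Pxz]; split; first by split.
apply: contrapT => nQ; case: hle => [exz|[lt1 lt2]].
  by apply: nQ; rewrite /= exz; apply: clrefl.
have [e e0 He] := openup cQ hz nQ.
have [d [d0 d1 d2]] : exists d : R, [/\ 0 < d, d <= e / 2 & d <= (z.2 - x.2) / 2] by apply: pos_min; lra.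
have [z1 z2 z3] := (inZP z).1 hz; have [x1 x2 x3] := (inZP x).1 hx.
have hx' : inZ (x.1, x.2 + d) by apply/inZP; split => /=; lra.
apply: nex; exists z; split => //; exists (x.1, x.2 + d); split => //.
- by split => /=; lra.
- move=> Pzx.
  have nn : ~ P x (x.1, x.2 + d) by apply: (clq1 cP) => //; lra.
  exact: nn (cltr cP Pxz Pzx).
- apply: He; split => /=; first by rewrite subrr normr0.
  by apply: absI; lra.
Qed.

Lemma WP_open P Q y : classical P -> classical Q -> inZ y -> WP P Q y ->
  exists2 e, 0 < e & forall y', inZ y' -> near2 e y' y -> WP P Q y'.
Proof.
move=> cP cQ hy [x [hx [lt1 lt2] nP nQ]].
have [e1 e10 H1] := openup cP hx nP.
have [e2 e20 H2] := openlo cQ hx nQ.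
have [d [d0 d1 d2]] : exists d : R, [/\ 0 < d, d <= e1 & d <= e2] by apply: pos_min; lra.
have [d' [d'0 d'1 d'2]] : exists d' : R, [/\ 0 < d', d' <= y.1 - x.1 & d' <= y.2 - x.2] by apply: pos_min; lra.
have [f [f0 f1 f2]] : exists f : R, [/\ 0 < f, f <= d & f <= d'] by apply: pos_min; lra.
exists f => // y' hy' ny; exists x; split => //.
- case: ny => /absP h1 /absP h2; split; lra.
- by apply: H1; apply: near2W ny _; lra.
- by apply: H2; apply: near2W ny _; lra.
Qed.

Lemma G2half P Q y x x' : classical P -> classical Q -> single_crossing P Q ->
  inZ y -> inZ x -> inZ x' -> lt_pt x y -> lt_pt x' y ->
  ~ P y x -> ~ Q x y -> ~ Q y x' -> ~ P x' y -> x.2 <= x'.2 -> False.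
Proof.
move=> cP cQ sc hy hx hx' [l1 l2] [l1' l2'] nPyx nQxy nQyx' nPx'y x2x'2.
have [y1 y2 y3] := (inZP y).1 hy; have [x1 x2 x3] := (inZP x).1 hx.
have [x1' x2' x3'] := (inZP x').1 hx'.
pose TP q := exists s, [/\ 0 <= s, s < y.1, ~ P y (s, q) & ~ Q (s, q) y].
pose TQ q := exists s, [/\ 0 <= s, s < y.1, ~ Q y (s, q) & ~ P (s, q) y].
have hZ s q : 0 <= s -> x.2 <= q <= x'.2 -> inZ (s, q).
  by move=> s0 /andP[q1 q2]; apply/inZP; split => /=; lra.
apply: (conn (a := x.2) (b := x'.2) (A := TP) (B := TQ)) => //.
- by exists x.1; split => //; rewrite -surjective_pairing.
- by exists x'.1; split => //; rewrite -surjective_pairing.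
- move=> q hq; have hq' := hq; move/andP: hq' => [q1 q2].
  have hs0 : inZ (x.1, q) by apply: hZ.
  have Ps0x : P (x.1, q) x by apply: (cldom cP) => //=; lra.
  have nP0 : ~ P y (x.1, q).
    move=> h; apply: nPyx. exact: (cltr cP h Ps0x).
  case: (pselect (Q (x.1, q) y)) => hQ; last by left; exists x.1; split.
  have hyq : inZ (y.1, q) by apply: hZ => //; lra.
  have [mP [/andP[mP1 mP2] PmP1 PmP2]] : exists s, [/\ x.1 <= s <= y.1, P (s, q) y & P y (s, q)].
    apply: ivt_h => //; try lra; first by apply: (clnot cP).
    by apply: (cldom cP) => //=; lra.
  have [mQ [/andP[mQ1 mQ2] QmQ1 QmQ2]] : exists s, [/\ x.1 <= s <= y.1, Q (s, q) y & Q y (s, q)].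
    apply: ivt_h => //; try lra.
    by apply: (cldom cQ) => //=; lra.
  have hmP : inZ (mP, q) by apply: hZ => //; lra.
  have hmQ : inZ (mQ, q) by apply: hZ => //; lra.
  have mPy : mP < y.1.
    rewrite lt_neqAle mP2 andbT; apply/negP => /eqP e.
    by apply: (cldomS cP (x := y) (y := (mP, q)) hy hmP _ _ _ PmP1) => /=; [lra|lra|right; lra].
  have mQy : mQ < y.1.
    rewrite lt_neqAle mQ2 andbT; apply/negP => /eqP e.
    by apply: (cldomS cQ (x := y) (y := (mQ, q)) hy hmQ _ _ _ QmQ1) => /=; [lra|lra|right; lra].
  case: (ltgtP mQ mP) => hm.
  + left; exists ((mQ + mP) / 2); split; try lra.
    * move=> h.
      have hs : inZ ((mQ + mP) / 2, q) by apply: hZ => //; lra.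
      have lt : (mQ + mP) / 2 < mP by lra.
      have nn := (clt cP hs hmP lt).2.
      exact: nn (cltr cP PmP1 h).
    * move=> h.
      have hs : inZ ((mQ + mP) / 2, q) by apply: hZ => //; lra.
      have lt : mQ < (mQ + mP) / 2 by lra.
      have nn := (clt cQ hmQ hs lt).2.
      exact: nn (cltr cQ h QmQ2).
  + right; exists ((mQ + mP) / 2); split; try lra.
    * move=> h.
      have hs : inZ ((mQ + mP) / 2, q) by apply: hZ => //; lra.
      have lt : (mQ + mP) / 2 < mQ by lra.
      have nn := (clt cQ hs hmQ lt).2.
      exact: nn (cltr cQ QmQ1 h).
    * move=> h.
      have hs : inZ ((mQ + mP) / 2, q) by apply: hZ => //; lra.
      have lt : mP < (mQ + mP) / 2 by lra.
      have nn := (clt cP hmP hs lt).2.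
      exact: nn (cltr cP h PmP2).
  + exfalso; rewrite hm in QmQ1 QmQ2.
    by apply: (sc_contra cP cQ sc hmP hy) => //; split => /=; lra.
- move=> q hq [s [s0 s1 nP nQ]].
  have [e1 e10 H1] := openlo cP hy nP.
  have [e2 e20 H2] := openup cQ hy nQ.
  have [d [d0 d1 d2]] : exists d : R, [/\ 0 < d, d <= e1 & d <= e2] by apply: pos_min; lra.
  exists d => // q' hq' hqq; exists s; split => //.
  + by apply: H1; split => /=; [rewrite subrr normr0|]; lra.
  + by apply: H2; split => /=; [rewrite subrr normr0|]; lra.
- move=> q hq [s [s0 s1 nP nQ]].
  have [e1 e10 H1] := openlo cQ hy nP.
  have [e2 e20 H2] := openup cP hy nQ.
  have [d [d0 d1 d2]] : exists d : R, [/\ 0 < d, d <= e1 & d <= e2] by apply: pos_min; lra.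
  exists d => // q' hq' hqq; exists s; split => //.
  + by apply: H1; split => /=; [rewrite subrr normr0|]; lra.
  + by apply: H2; split => /=; [rewrite subrr normr0|]; lra.
- move=> q hq [s [s0 s1 nP nQ]] [s' [s0' s1' nQ' nP']].
  have hs : inZ (s, q) by apply: hZ.
  have hs' : inZ (s', q) by apply: hZ.
  case: (leP s s') => hss.
  + have hd : Q (s, q) (s', q) by apply: (cldom cQ) => //=.
    exact (nQ (cltr cQ hd (clnot cQ hy hs' nQ'))).
  + have hd : P (s', q) (s, q) by apply: (cldom cP) => //=; lra.
    exact (nP' (cltr cP hd (clnot cP hy hs nP))).
Qed.

Lemma G2 P Q y : classical P -> classical Q -> single_crossing P Q -> inZ y ->
  WP P Q y -> WP Q P y -> False.
Proof.
move=> cP cQ sc hy [x [hx lx nP nQ]] [x' [hx' lx' nQ' nP']].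
case: (leP x.2 x'.2) => h.
  exact: (G2half cP cQ sc hy hx hx' lx lx' nP nQ nQ' nP').
apply: (G2half cQ cP (sc_sym sc) hy hx' hx lx' lx nQ' nP' nP nQ); lra.
Qed.

Lemma G3 P Q y : classical P -> classical Q -> single_crossing P Q -> inZ y ->
  0 < y.1 -> 0 < y.2 -> WP P Q y \/ WP Q P y.
Proof.
move=> cP cQ sc hy y1 y2; apply: contrapT => /not_orP[n1 n2].
have [x [hx [l1 l2] Pxy Pyx]] := exists_indiff cP hy y1 y2.
have [y1' y2' y3'] := (inZP y).1 hy; have [x1 x2 x3] := (inZP x).1 hx.
apply: (sc_contra cP cQ sc hx hy) => //.
- apply: (limup cQ hy) => e e0.
  have [d [d0 d1 d2]] : exists d : R, [/\ 0 < d, d <= e / 2 & d <= (y.2 - x.2) / 2] by apply: pos_min; lra.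
  have hu : inZ (x.1, x.2 + d) by apply/inZP; split => /=; lra.
  exists (x.1, x.2 + d); split; last first.
    by split => /=; [rewrite subrr normr0|apply: absI]; lra.
  apply: contrapT => nQ; apply: n1; exists (x.1, x.2 + d); split => //.
    by split => /=; lra.
  move=> Pyu.
  have nn : ~ P x (x.1, x.2 + d) by apply: (clq1 cP) => //; lra.
  exact: nn (cltr cP Pxy Pyu).
- apply: (limlo cQ hy) => e e0.
  have [d [d0 d1 d2]] : exists d : R, [/\ 0 < d, d <= e / 2 & d <= (y.1 - x.1) / 2] by apply: pos_min; lra.
  have hu : inZ (x.1 + d, x.2) by apply/inZP; split => /=; lra.
  exists (x.1 + d, x.2); split; last first.
    by split => /=; [apply: absI|rewrite subrr normr0]; lra.
  apply: contrapT => nQ; apply: n2; exists (x.1 + d, x.2); split => //.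
    by split => /=; lra.
  move=> Puy.
  have nn : ~ P (x.1 + d, x.2) x by apply: (clt2 cP) => //; lra.
  exact: nn (cltr cP Puy Pyx).
Qed.

Definition btw (a b s : R) := (a <= s <= b) || (b <= s <= a).

Lemma conn_any (a b : R) (A B : R -> Prop) : A a -> B b ->
  (forall s, btw a b s -> A s \/ B s) ->
  (forall s, btw a b s -> A s -> exists2 e, 0 < e & forall s', btw a b s' -> `|s' - s| < e -> A s') ->
  (forall s, btw a b s -> B s -> exists2 e, 0 < e & forall s', btw a b s' -> `|s' - s| < e -> B s') ->
  (forall s, btw a b s -> A s -> B s -> False) -> False.
Proof.
move=> Aa Bb cov oA oB dis.
have bt1 s : a <= s <= b -> btw a b s by rewrite /btw => ->.
have bt2 s : b <= s <= a -> btw a b s by rewrite /btw => ->; rewrite orbT.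
case: (leP a b) => ab.
- apply: (conn ab Aa Bb) => [s hs|s hs As|s hs Bs|s hs].
  + by apply: cov; apply: bt1.
  + have [e e0 H] := oA s (bt1 _ hs) As; exists e => // s' hs'; apply: H; exact: bt1.
  + have [e e0 H] := oB s (bt1 _ hs) Bs; exists e => // s' hs'; apply: H; exact: bt1.
  + by apply: dis; apply: bt1.
- apply: (conn (ltW ab) Bb Aa) => [s hs|s hs As|s hs Bs|s hs].
  + by rewrite or_comm; apply: cov; apply: bt2.
  + have [e e0 H] := oB s (bt2 _ hs) As; exists e => // s' hs'; apply: H; exact: bt2.
  + have [e e0 H] := oA s (bt2 _ hs) Bs; exists e => // s' hs'; apply: H; exact: bt2.
  + by move=> h1 h2; apply: (dis s (bt2 _ hs)).
Qed.

Lemma line_conn P Q (f : R -> R * R) a b : classical P -> classical Q -> single_crossing P Q ->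
  (forall s, btw a b s -> [/\ inZ (f s), 0 < (f s).1 & 0 < (f s).2]) ->
  (forall s s' e, `|s' - s| < e -> near2 e (f s') (f s)) ->
  WP P Q (f a) -> WP Q P (f b) -> False.
Proof.
move=> cP cQ sc hf hn Wa Wb.
apply: (conn_any (A := fun s => WP P Q (f s)) (B := fun s => WP Q P (f s)) Wa Wb).
- by move=> s hs; have [h1 h2 h3] := hf s hs; apply: G3.
- move=> s hs W; have [h1 h2 h3] := hf s hs.
  have [e e0 H] := WP_open cP cQ h1 W; exists e => // s' hs' hss.
  by apply: H; [case: (hf s' hs')|apply: hn].
- move=> s hs W; have [h1 h2 h3] := hf s hs.
  have [e e0 H] := WP_open cQ cP h1 W; exists e => // s' hs' hss.
  by apply: H; [case: (hf s' hs')|apply: hn].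
- by move=> s hs W1 W2; have [h1 h2 h3] := hf s hs; apply: (G2 cP cQ sc h1 W1 W2).
Qed.

Lemma btw_bounds (a b s : R) : btw a b s -> Num.min a b <= s /\ s <= Num.max a b.
Proof.
rewrite /btw => /orP[/andP[h1 h2]|/andP[h1 h2]]; split.
- by rewrite ge_min h1.
- by rewrite le_max h2 orbT.
- by rewrite ge_min h1 orbT.
- by rewrite le_max h2.
Qed.

Lemma T3 P Q : classical P -> classical Q -> single_crossing P Q -> inclp P Q \/ inclp Q P.
Proof.
move=> cP cQ sc; case: (pselect (inclp P Q)) => h; [by left|right; apply: contrapT => h2].
have [y1 [hy1 W1]] := G1 cP cQ h2.
have [y2 [hy2 W2]] := G1 cQ cP h.
have pos (y : R * R) P' Q' : WP P' Q' y -> 0 < y.1 /\ 0 < y.2.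
  case=> x [hx [l1 l2] _ _]; have [x1 x2 x3] := (inZP x).1 hx; split; lra.
have [p11 p12] := pos _ _ _ W1; have [p21 p22] := pos _ _ _ W2.
have [a1 a2 a3] := (inZP y1).1 hy1; have [b1 b2 b3] := (inZP y2).1 hy2.
case: (pselect (WP P Q (y2.1, y1.2))) => Wm.
- apply: (line_conn (f := fun s => (y2.1, s)) (a := y1.2) (b := y2.2) cP cQ sc) => //.
  + move=> s /btw_bounds [k1 k2]; split => //=; last first.
      move: k1; rewrite ge_min => /orP[]; lra.
    apply/inZP; split => /=; try lra.
      by move: k1; rewrite ge_min => /orP[]; lra.
    by move: k2; rewrite le_max => /orP[]; lra.
  + move=> s s' e hs; split => /=; last by [].
    by rewrite subrr normr0; apply: le_lt_trans hs.
  + by rewrite -surjective_pairing.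
- have Wm' : WP Q P (y2.1, y1.2).
    have [|//|//] := G3 (y := (y2.1, y1.2)) cP cQ sc _ p21 p12.
    by apply/inZP; split => /=; lra.
  apply: (line_conn (f := fun s => (s, y1.2)) (a := y1.1) (b := y2.1) cP cQ sc) => //.
  + move=> s /btw_bounds [k1 k2]; split => //=; last first.
      move: k1; rewrite ge_min => /orP[]; lra.
    apply/inZP; split => /=; try lra.
    by move: k1; rewrite ge_min => /orP[]; lra.
  + move=> s s' e hs; split => /=; first by [].
    by rewrite subrr normr0; apply: le_lt_trans hs.
  + by rewrite -surjective_pairing.
Qed.

Lemma T2 P Q : classical P -> classical Q -> single_crossing P Q -> inclp P Q -> inclp Q P -> False.
Proof.
move=> cP cQ sc h1 h2.
have hy : inZ ((1 : R), (1 : R)) by apply/inZP; split => /=; lra.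
have [] := G3 cP cQ sc hy _ _ => //= -[x [hx lx n1 n2]].
- by apply: n2; apply: (inclp_use h2) => //; apply: (clnot cP).
- by apply: n2; apply: (inclp_use h1) => //; apply: (clnot cQ).
Qed.
End Order2.
Section Main.
Variable R : realType.
Implicit Types (x y z w u : R * R) (P Q : pref R).

Lemma cvg2 (f : nat -> R * R) (l1 l2 : R) : (fun n => (f n).1) @ \oo --> l1 ->
  (fun n => (f n).2) @ \oo --> l2 -> f @ \oo --> (l1, l2).
Proof.
move=> h1 h2.
have -> : f = (fun n => ((f n).1, (f n).2)) by apply: funext => n; rewrite -surjective_pairing.
exact: (cvg_pair h1 h2).
Qed.

Lemma evcl (u : nat -> R * R) (S : set (R * R)) l : closed S ->
  (exists N, forall n, (N <= n)%N -> S (u n)) -> u @ \oo --> l -> S l.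
Proof.
move=> cS [N HN] cv.
have ev : \forall n \near \oo, S (u n) by exists N => // n /= hn; apply: HN.
exact: (closed_cvg S cS ev l cv).
Qed.

Lemma evup (u : nat -> R * R) P w l : classical P -> inZ w ->
  (exists N, forall n, (N <= n)%N -> P (u n) w) -> u @ \oo --> l -> P l w.
Proof.
move=> cP hw [N HN] cv.
have : [set x | inZ x /\ P x w] l.
  apply: (evcl (clup cP hw) _ cv); exists N => n hn; split; last exact: HN.
  by case: (clZ cP (HN n hn)).
by case.
Qed.

Lemma evlo (u : nat -> R * R) P w l : classical P -> inZ w ->
  (exists N, forall n, (N <= n)%N -> P w (u n)) -> u @ \oo --> l -> inZ l /\ P w l.
Proof.
move=> cP hw [N HN] cv.
apply: (evcl (cllo cP hw) _ cv); exists N => n hn; split; last exact: HN.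
by case: (clZ cP (HN n hn)).
Qed.

Variable D : set (pref R).
Hypothesis rD : rich_single_crossing D.

Lemma Dcl P : D P -> classical P.
Proof. by case: rD => h _; apply: h. Qed.
Lemma Dsc P Q : D P -> D Q -> P <> Q -> single_crossing P Q.
Proof. by case: rD => _ [h _]; apply: h. Qed.
Lemma Drich x y : inZ x -> inZ y -> lt_pt x y -> exists P, D P /\ P x y /\ P y x.
Proof. by case: rD => _ [_ h] hx hy l; have [P [DP [a b]]] := h x y hx hy l; exists P. Qed.

Lemma Dtot P Q : D P -> D Q -> P <> Q -> prec P Q \/ prec Q P.
Proof.
move=> DP DQ ne; case: (T3 (Dcl DP) (Dcl DQ) (Dsc DP DQ ne)) => h.
  by left; split.
by right; split => // e; apply: ne.
Qed.

Lemma Danti P Q : D P -> D Q -> inclp P Q -> inclp Q P -> P = Q.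
Proof.
move=> DP DQ h1 h2; apply: contrapT => ne.
exact: (T2 (Dcl DP) (Dcl DQ) (Dsc DP DQ ne) h1 h2).
Qed.

Lemma prec_inclp P Q : prec P Q -> inclp P Q.
Proof. by case. Qed.

Lemma chain_up (Rn : nat -> pref R) : (forall n, precsim (Rn n) (Rn n.+1)) ->
  forall m n, (m <= n)%N -> inclp (Rn m) (Rn n).
Proof.
move=> h m n /subnK <-; elim: (n - m)%N => [|k IH]; first by rewrite add0n; apply: inclp_refl.
by rewrite addSn; apply: inclp_trans IH (precsim_inclp (h _)).
Qed.

Lemma chain_down (Rn : nat -> pref R) : (forall n, precsim (Rn n.+1) (Rn n)) ->
  forall m n, (m <= n)%N -> inclp (Rn n) (Rn m).
Proof.
move=> h m n /subnK <-; elim: (n - m)%N => [|k IH]; first by rewrite add0n; apply: inclp_refl.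
by rewrite addSn; apply: inclp_trans (precsim_inclp (h _)) IH.
Qed.

Section Mech.
Variable J : set (pref R).
Hypothesis JD : forall P, J P -> D P.
Variable F : pref R -> R * R.
Hypothesis mF : mechanism_on J F.
Hypothesis sF : strategy_proof J F.

Lemma spmono Ra Rb : J Ra -> J Rb -> inclp Ra Rb ->
  (F Ra).1 <= (F Rb).1 /\ (F Ra).2 <= (F Rb).2.
Proof.
move=> Ja Jb hi; set x := F Ra; set y := F Rb.
have cA := Dcl (JD Ja); have cB := Dcl (JD Jb).
have hx : inZ x := mF Ja; have hy : inZ y := mF Jb.
have Axy : Ra x y := sF Ja Jb; have Byx : Rb y x := sF Jb Ja.
have q2 : x.2 <= y.2.
  rewrite leNgt; apply/negP => lt.
  case: (leP x.1 y.1) => h1.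
    by apply: (cldomS cB hx hy h1 (ltW lt) (or_intror lt)).
  have lyx : lt_pt y x by split.
  have Ayx : Ra y x by apply: (inclp_use hi).
  have Bxy : Rb x y by apply: (U_lemma cA cB hi).
  case: (pselect (Ra = Rb)) => e.
    by move: lt; rewrite /x /y e ltxx.
  by apply: (sc_contra cA cB (Dsc (JD Ja) (JD Jb) e) hy hx lyx).
split => //.
rewrite leNgt; apply/negP => lt.
by apply: (cldomS cA hy hx (ltW lt) q2 (or_introl lt)).
Qed.

Variable P : pref R.
Hypothesis JP : J P.
Variable Rn : nat -> pref R.
Hypothesis JR : forall n, J (Rn n).
Hypothesis Lo : forall a, D a -> prec a P -> exists N, forall n, (N <= n)%N -> prec a (Rn n).
Hypothesis Hi : forall b, D b -> prec P b -> exists N, forall n, (N <= n)%N -> prec (Rn n) b.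

Let w := F P.
Let cP := Dcl (JD JP).
Let hw : inZ w := mF JP.

Lemma main_up : (forall n, precsim (Rn n) (Rn n.+1)) ->
  exists z, [/\ inZ z, (fun n => F (Rn n)) @ \oo --> z & indirect_pref F P z].
Proof.
move=> mono.
have ch := chain_up mono.
have cR n : classical (Rn n) := Dcl (JD (JR n)).
have hxn n : inZ (F (Rn n)) := mF (JR n).
have belowP n : inclp (Rn n) P.
  case: (pselect (Rn n = P)) => [->|ne]; first exact: inclp_refl.
  case: (Dtot (JD (JR n)) (JD JP) ne) => [[] //|hp].
  have [N HN] := Hi (JD (JR n)) hp.
  have [ne2 h2] := HN (maxn N n) (leq_maxl _ _).
  have h3 := ch n (maxn N n) (leq_maxr _ _).
  by case: ne2; apply: (Danti (JD (JR _)) (JD (JR _))).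
have nd1 : nondecreasing_seq (fun n => (F (Rn n)).1).
  by move=> m n mn; apply: (spmono (JR m) (JR n) (ch m n mn)).1.
have nd2 : nondecreasing_seq (fun n => (F (Rn n)).2).
  by move=> m n mn; apply: (spmono (JR m) (JR n) (ch m n mn)).2.
have ub1 n : (F (Rn n)).1 <= w.1 := (spmono (JR n) JP (belowP n)).1.
have ub2 n : (F (Rn n)).2 <= w.2 := (spmono (JR n) JP (belowP n)).2.
have hu1 : has_ubound (range (fun n => (F (Rn n)).1)) by exists w.1 => _ [n _ <-].
have hu2 : has_ubound (range (fun n => (F (Rn n)).2)) by exists w.2 => _ [n _ <-].
have hs1 : has_sup (range (fun n => (F (Rn n)).1)) by split => //; exists (F (Rn 0)).1, 0%N.
have hs2 : has_sup (range (fun n => (F (Rn n)).2)) by split => //; exists (F (Rn 0)).2, 0%N.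
set l1 := sup (range (fun n => (F (Rn n)).1)).
set l2 := sup (range (fun n => (F (Rn n)).2)).
have [z [cv xz1 xz2 zw1 zw2]] : exists z : R * R, [/\ (fun n => F (Rn n)) @ \oo --> z,
    forall n, (F (Rn n)).1 <= z.1, forall n, (F (Rn n)).2 <= z.2, z.1 <= w.1 & z.2 <= w.2].
  exists (l1, l2); split => /=.
  - by apply: cvg2; [apply: nondecreasing_cvgn|apply: nondecreasing_cvgn].
  - by move=> n; apply: (sup_upper_bound hs1); exists n.
  - by move=> n; apply: (sup_upper_bound hs2); exists n.
  - by apply: ge_sup; [exists (F (Rn 0)).1, 0%N|move=> _ [n _ <-]].
  - by apply: ge_sup; [exists (F (Rn 0)).2, 0%N|move=> _ [n _ <-]].
have [hz Pwz] : inZ z /\ P w z.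
  apply: (evlo cP hw _ cv); exists 0%N => n _; exact: (sF JP (JR n)).
have SPn n : Rn n (F (Rn n)) w := sF (JR n) JP.
exists z; split => //; split => //; split => //.
have [z1 z2 z3] := (inZP z).1 hz; have [w1 w2 w3] := (inZP w).1 hw.
case: (leP w.2 z.2) => hq.
  by apply: (cldom cP) => //=.
case: (leP w.1 z.1) => ht.
- (* z.1 = w.1 *)
  exfalso.
  have lxw n : lt_pt (F (Rn n)) w.
    split; last by apply: (le_lt_trans (xz2 n)).
    rewrite lt_neqAle (le_trans (xz1 n) zw1) andbT; apply/negP => /eqP e.
    apply: (cldomS (cR n) hw (hxn n) _ _ _ (SPn n)).
    + by rewrite e.
    + exact: (le_trans (xz2 n)) (ltW hq).
    + by right; apply: (le_lt_trans (xz2 n)).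
  have R0z : Rn 0 z w.
    apply: (evup (cR 0) hw _ cv); exists 0%N => n _.
    by apply: (inclp_use (ch 0%N n (leq0n n))) => //; apply: SPn.
  apply: (cldomS (cR 0) hw hz _ _ _ R0z) => /=.
  + exact: ht.
  + exact: ltW.
  + by right.
-
  apply: contrapT => nP.
  have [e e0 He] := openup cP hw nP.
  have [d [d0 d1 d2]] : exists d : R, [/\ 0 < d, d <= e / 2 & d <= (w.2 - z.2) / 2].
    by apply: pos_min; lra.
  have hz' : inZ (z.1, z.2 + d) by apply/inZP; split => /=; lra.
  have lzw : lt_pt (z.1, z.2 + d) w by split => /=; lra.
  have nPz' : ~ P (z.1, z.2 + d) w.
    apply: He; split => /=; first by rewrite subrr normr0.
    by apply: absI; lra.
  have [a [Da [a1 a2]]] := Drich hz' hw lzw.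
  have ca := Dcl Da.
  have ne : a <> P by move=> e'; apply: nPz'; rewrite -e'.
  case: (Dtot Da (JD JP) ne) => hp; last first.
    by apply: nPz'; apply: (inclp_use (prec_inclp hp)).
  have [N HN] := Lo Da hp.
  have azw : a z w.
    apply: (evup ca hw _ cv); exists N => n hn.
    have lx : lt_pt (F (Rn n)) w.
      by split; [apply: (le_lt_trans (xz1 n))|apply: (le_lt_trans (xz2 n))].
    exact: (inclp_use (prec_inclp (HN n hn)) (hxn n) hw lx (SPn n)).
  have nn : ~ a z (z.1, z.2 + d) by apply: (clq1 ca) => //; lra.
  exact: (nn (cltr ca azw a2)).
Qed.

Lemma main_down : (forall n, precsim (Rn n.+1) (Rn n)) ->
  exists z, [/\ inZ z, (fun n => F (Rn n)) @ \oo --> z & indirect_pref F P z].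
Proof.
move=> mono.
have ch := chain_down mono.
have cR n : classical (Rn n) := Dcl (JD (JR n)).
have hxn n : inZ (F (Rn n)) := mF (JR n).
have aboveP n : inclp P (Rn n).
  case: (pselect (Rn n = P)) => [->|ne]; first exact: inclp_refl.
  case: (Dtot (JD (JR n)) (JD JP) ne) => [hp|[] //].
  have [N HN] := Lo (JD (JR n)) hp.
  have [ne2 h2] := HN (maxn N n) (leq_maxl _ _).
  have h3 := ch n (maxn N n) (leq_maxr _ _).
  by case: ne2; apply: (Danti (JD (JR _)) (JD (JR _))).
have ni1 : nonincreasing_seq (fun n => (F (Rn n)).1).
  by move=> m n mn; apply: (spmono (JR n) (JR m) (ch m n mn)).1.
have ni2 : nonincreasing_seq (fun n => (F (Rn n)).2).
  by move=> m n mn; apply: (spmono (JR n) (JR m) (ch m n mn)).2.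
have lb1 n : w.1 <= (F (Rn n)).1 := (spmono JP (JR n) (aboveP n)).1.
have lb2 n : w.2 <= (F (Rn n)).2 := (spmono JP (JR n) (aboveP n)).2.
have hl1 : has_lbound (range (fun n => (F (Rn n)).1)) by exists w.1 => _ [n _ <-].
have hl2 : has_lbound (range (fun n => (F (Rn n)).2)) by exists w.2 => _ [n _ <-].
set l1 := inf (range (fun n => (F (Rn n)).1)).
set l2 := inf (range (fun n => (F (Rn n)).2)).
have [z [cv xz1 xz2 zw1 zw2]] : exists z : R * R, [/\ (fun n => F (Rn n)) @ \oo --> z,
    forall n, z.1 <= (F (Rn n)).1, forall n, z.2 <= (F (Rn n)).2, w.1 <= z.1 & w.2 <= z.2].
  exists (l1, l2); split => /=.
  - by apply: cvg2; [apply: nonincreasing_cvgn|apply: nonincreasing_cvgn].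
  - by move=> n; apply: (ge_inf hl1); exists n.
  - by move=> n; apply: (ge_inf hl2); exists n.
  - by apply: lb_le_inf; [exists (F (Rn 0)).1, 0%N|move=> _ [n _ <-]].
  - by apply: lb_le_inf; [exists (F (Rn 0)).2, 0%N|move=> _ [n _ <-]].
have [hz Pwz] : inZ z /\ P w z.
  apply: (evlo cP hw _ cv); exists 0%N => n _; exact: (sF JP (JR n)).
have SPn n : Rn n (F (Rn n)) w := sF (JR n) JP.
exists z; split => //; split => //; split => //.
have [z1 z2 z3] := (inZP z).1 hz; have [w1 w2 w3] := (inZP w).1 hw.
case: (leP z.1 w.1) => ht.
  by apply: (cldom cP) => //=.
case: (leP z.2 w.2) => hq.
- (* z.2 = w.2 *)
  exfalso.
  have lxw n : lt_pt w (F (Rn n)).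
    split; first by apply: (lt_le_trans ht (xz1 n)).
    rewrite lt_neqAle (le_trans zw2 (xz2 n)) andbT; apply/negP => /eqP e.
    apply: (cldomS (cR n) hw (hxn n) _ _ _ (SPn n)).
    + exact: (le_trans (ltW ht) (xz1 n)).
    + by rewrite e.
    + by left; apply: (lt_le_trans ht (xz1 n)).
  have R0z : Rn 0 z w.
    apply: (evup (cR 0) hw _ cv); exists 0%N => n _.
    apply: (U_lemma (cR n) (cR 0) (ch 0%N n (leq0n n))) => //; exact: SPn.
  apply: (cldomS (cR 0) hw hz _ _ _ R0z) => /=.
  + exact: ltW.
  + exact: hq.
  + by left.
-
  apply: contrapT => nP.
  have [e e0 He] := openup cP hw nP.
  have [d [d0 d1 d2]] : exists d : R, [/\ 0 < d, d <= e / 2 & d <= (z.1 - w.1) / 2].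
    by apply: pos_min; lra.
  have hz' : inZ (z.1 - d, z.2) by apply/inZP; split => /=; lra.
  have lzw : lt_pt w (z.1 - d, z.2) by split => /=; lra.
  have nPz' : ~ P (z.1 - d, z.2) w.
    apply: He; split => /=; last by rewrite subrr normr0.
    by apply: absI; lra.
  have [b [Db [b1 b2]]] := Drich hw hz' lzw.
  have cb := Dcl Db.
  have ne : b <> P by move=> e'; apply: nPz'; rewrite -e'.
  case: (Dtot Db (JD JP) ne) => hp.
    by apply: nPz'; apply: (U_lemma cb cP (prec_inclp hp)).
  have [N HN] := Hi Db hp.
  have bzw : b z w.
    apply: (evup cb hw _ cv); exists N => n hn.
    have lx : lt_pt w (F (Rn n)).
      by split; [apply: (lt_le_trans _ (xz1 n))|apply: (lt_le_trans _ (xz2 n))]; lra.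
    exact: (U_lemma (cR n) cb (prec_inclp (HN n hn)) hw (hxn n) lx (SPn n)).
  have nn : ~ b z (z.1 - d, z.2) by apply: (clt1 cb) => //; lra.
  exact: (nn (cltr cb bzw b1)).
Qed.
End Mech.
End Main.
Section Final.
Variable R : realType.
Variable D : set (pref R).
Hypothesis rD : rich_single_crossing D.

Lemma gen (J : set (pref R)) (JD : forall P, J P -> D P) F :
  mechanism_on J F -> strategy_proof J F ->
  (forall P Rn, J P -> (forall n, J (Rn n)) -> order_converges J Rn P ->
    (forall a, D a -> prec a P -> exists N, forall n, (N <= n)%N -> prec a (Rn n)) /\
    (forall b, D b -> prec P b -> exists N, forall n, (N <= n)%N -> prec (Rn n) b)) ->
  VF_continuous J F.
Proof.
move=> mF sF H P JP Rn JR mono oc.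
have [Lo Hi] := H P Rn JP JR oc.
case: mono => mono.
- have [z [h1 h2 h3]] := main_up rD JD mF sF JP JR Lo Hi mono.
  by exists z.
- have [z [h1 h2 h3]] := main_down rD JD mF sF JP JR Lo Hi mono.
  by exists z.
Qed.

Lemma int_lo Plo Phi P a (Rn : nat -> pref R) : D Plo -> D Phi -> precsim Plo Phi ->
  closed_interval D Plo Phi P -> (forall n, closed_interval D Plo Phi (Rn n)) ->
  D a -> prec a P -> ~ closed_interval D Plo Phi a -> forall n, prec a (Rn n).
Proof.
move=> DPlo DPhi lohi [DP [loP PHi]] JR Da haP nJ.
have ne : a <> Plo.
  move=> e; apply: nJ; rewrite e; split => //; split => //; by right.
case: (Dtot rD Da DPlo ne) => hp; last first.
  exfalso; apply: nJ; split => //; split; first by left.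
  case: (pselect (a = Phi)) => e; first by right.
  left; split => //; exact: (inclp_trans (prec_inclp haP) (precsim_inclp PHi)).
move=> n; have [_ [loR _]] := JR n; split.
  by move=> e; apply: nJ; rewrite e.
exact: (inclp_trans (prec_inclp hp) (precsim_inclp loR)).
Qed.

Lemma int_hi Plo Phi P b (Rn : nat -> pref R) : D Plo -> D Phi -> precsim Plo Phi ->
  closed_interval D Plo Phi P -> (forall n, closed_interval D Plo Phi (Rn n)) ->
  D b -> prec P b -> ~ closed_interval D Plo Phi b -> forall n, prec (Rn n) b.
Proof.
move=> DPlo DPhi lohi [DP [loP PHi]] JR Db hPb nJ.
have ne : b <> Phi.
  move=> e; apply: nJ; rewrite e; split => //; split => //; by right.
case: (Dtot rD Db DPhi ne) => hp.
  exfalso; apply: nJ; split => //; split; last by left.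
  case: (pselect (b = Plo)) => e; first by right.
  left; split; first by move=> e'; apply: e.
  exact: (inclp_trans (precsim_inclp loP) (prec_inclp hPb)).
move=> n; have [_ [_ RHi]] := JR n; split.
  by move=> e; apply: nJ; rewrite -e.
exact: (inclp_trans (precsim_inclp RHi) (prec_inclp hp)).
Qed.
End Final.

Unset Implicit Arguments.
Theorem mainTheorem6 (R : realType) (D : set (pref R)) :
  rich_single_crossing D ->
  (forall F : pref R -> pt R,
      mechanism_on D F -> strategy_proof D F -> VF_continuous D F) /\
  (forall (Plo Phi : pref R), D Plo -> D Phi -> precsim Plo Phi ->
   forall F : pref R -> pt R,
      mechanism_on (closed_interval D Plo Phi) F ->
      strategy_proof (closed_interval D Plo Phi) F ->
      VF_continuous (closed_interval D Plo Phi) F).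
Proof.
move=> rD; split.
- move=> F mF sF; apply: (gen rD (J := D)) => // P Rn JP JR [oc1 oc2].
- move=> Plo Phi DPlo DPhi lohi F mF sF.
  apply: (gen rD (J := closed_interval D Plo Phi)) => //; first by move=> P [].
  move=> P Rn JP JR [oc1 oc2]; split.
  + move=> a Da haP; case: (pselect (closed_interval D Plo Phi a)) => Ja.
      exact: oc1.
    by exists 0%N => n _; apply: (int_lo rD DPlo DPhi lohi JP JR Da haP Ja).
  + move=> b Db hPb; case: (pselect (closed_interval D Plo Phi b)) => Jb.
      exact: oc2.
    by exists 0%N => n _; apply: (int_hi rD DPlo DPhi lohi JP JR Db hPb Jb).
Qed.
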